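(* Consider Janus Quicksort (JQuick), as described in the context, run on $n$ elements with distinct keys distributed over $p$ processes with $n/p$ elements each. A randomly selected input element takes part in more than $20\log_{8/7} p$ distributed levels of recursion before it becomes part of a base case with probability $O(p^{-7})$.
   Context: Janus Quicksort (JQuick) is a recursive distributed-memory sorting algorithm. The input is $n$ elements with pairwise distinct keys, distributed over $p$ processes numbered $0,\dots,p-1$ with exactly $n/p$ elements per process ($n$ a multiple of $p$). The algorithm maintains tasks; a task is a contiguous range of processes together with a contiguous range of the global sorted order of elements that these processes jointly hold, every process holding exactly $n/p$ elements in total, summed over all tasks it belongs to. A process may belong to two tasks at once (a ''janus process''), and it then processes both simultaneously. One distributed level of recursion on a task performs four steps: (1) pivot selection: an element of the task chosen uniformly at random is broadcast to all processes of the task; (2) partitioning: each process splits its elements of the task into small elements (smaller than the pivot) and large elements (at least the pivot); (3) data assignment: using prefix sums and broadcasts, the small elements are assigned to a left group consisting of an initial segment of the task's processes and the large elements to a right group consisting of a final segment, such that every process again holds exactly $n/p$ elements in total; the two groups share at most one process (a janus process); (4) data exchange: elements are sent to their assigned processes. Then the left group recursively sorts the small elements and the right group the large elements. A task covering only one or two processes is a base case; base cases are not split further but sorted in a second phase (locally, or by exchanging data between the two processes, selecting, and sorting locally). Here $\log_{8/7}$ denotes logarithm to base $8/7$. *)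

(* Defs.v *)
From Stdlib Require Import Reals Lia List.
Open Scope R_scope.

(* Abstract model of JQuick, tracked through global ranks.
   With m = n/p elements per process, the elements of the whole input, laid out
   in global sorted order, occupy "slots" 0..n-1, slot j living on process j/m.
   The data-assignment step (prefix sums + exactly m elements per process)
   keeps the invariant that the element of global rank j sits in slot j once its
   task has been split; hence a task is determined by its rank range. *)

(* A task: processes pa..pb (inclusive), element ranks lo..hi-1. *)
Record task := Task { pa : nat; pb : nat; lo : nat; hi : nat }.

Definition is_base (T : task) : bool := Nat.leb (pb T - pa T) 1.

(* Splitting T with pivot of global rank k (lo <= k < hi):
   small elements (ranks lo..k-1) go to the left group = initial segment of
   processes pa .. (k-1)/m, large elements (ranks k..hi-1, pivot included) go
   to the right group = final segment k/m .. pb.  The two groups share the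
   janus process when (k-1)/m = k/m. *)
Definition left_task (m : nat) (T : task) (k : nat) : task :=
  Task (pa T) ((k - 1) / m) (lo T) k.
Definition right_task (m : nat) (T : task) (k : nat) : task :=
  Task (k / m) (pb T) k (hi T).

(* reach m t T e = probability that the element of global rank e (belonging to
   task T) takes part in at least t distributed levels of recursion, starting
   from task T.  Each distributed level chooses the pivot uniformly at random
   among the task's elements, independently of earlier choices. *)
Fixpoint reach (m : nat) (t : nat) (T : task) (e : nat) : R :=
  match t with
  | O => 1
  | S t' =>
      if is_base T then 0
      else / INR (hi T - lo T) *
           fold_right Rplus 0
             (map (fun k => if Nat.ltb e k then reach m t' (left_task m T k) e
                            else reach m t' (right_task m T k) e)
                  (seq (lo T) (hi T - lo T)))
  end.

Definition init_task (p n : nat) : task := Task 0 (p - 1) 0 n.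

Definition prob_levels_ge (p n t : nat) : R :=
  / INR n * fold_right Rplus 0
              (map (fun e => reach (n / p) t (init_task p n) e) (seq 0 n)).

(* "more than x levels", x >= 0 real: at least (least integer > x) levels;
   up x is Stdlib's least integer strictly greater than x. *)
Definition prob_levels_gt (p n : nat) (x : R) : R :=
  prob_levels_ge p n (Z.to_nat (up x)).

(* Main.v *)
Require Import Defs.
From Stdlib Require Import Reals.
From Stdlib Require Import Lia List ZArith Lra.
Open Scope R_scope.

Lemma sumR_le {A} (f h : A -> R) l :
  (forall a, In a l -> f a <= h a) ->
  fold_right Rplus 0 (map f l) <= fold_right Rplus 0 (map h l).
Proof.
  induction l as [|a l IH]; simpl; intros H; [lra|].
  apply Rplus_le_compat; [apply H; auto| apply IH; auto].
Qed.

Lemma sumR_bound {A} (f : A -> R) l c :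
  (forall a, In a l -> f a <= c) ->
  fold_right Rplus 0 (map f l) <= INR (length l) * c.
Proof.
  induction l as [|a l IH]; cbn [map fold_right length]; intros H; [simpl; lra|].
  rewrite S_INR.
  assert (f a <= c) by (apply H; simpl; auto).
  assert (fold_right Rplus 0 (map f l) <= INR (length l) * c) by (apply IH; intros; apply H; simpl; auto).
  lra.
Qed.

Lemma sumR_const_mul {A} (c : R) (g : A -> nat) l :
  fold_right Rplus 0 (map (fun a => c * INR (g a)) l)
  = c * INR (list_sum (map g l)).
Proof.
  induction l as [|a l IH]; simpl; [ring|].
  rewrite IH, plus_INR. ring.
Qed.

Local Open Scope nat_scope.
Lemma comb_aux lo x N : (x < N)%nat -> forall L, (L <= N)%nat ->
  let F := list_sum (map (fun k => if Nat.ltb (lo + x) k then k - lo else lo + N - k)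
                         (seq lo L)) in
  ((L <= x + 1)%nat -> (2 * F + L * L = 2 * L * N + L)%nat) /\
  ((x + 1 <= L)%nat -> (2 * F + 2 * x * (x + 1) + L = 2 * (x + 1) * N + L * L)%nat).
Proof.
  intros Hx L. induction L as [|L IH]; intros HL F; subst F.
  - simpl. split; intros; lia.
  - rewrite seq_S, map_app, list_sum_app. simpl.
    destruct IH as [IH1 IH2]; [lia|].
    set (F := list_sum _) in *.
    destruct (Nat.ltb (lo + x) (lo + L)) eqn:E.
    + apply Nat.ltb_lt in E.
      split; intros; [lia|].
      assert (x + 1 <= L)%nat by lia. specialize (IH2 H0).
      replace (lo + L - lo)%nat with L by lia. nia.
    + apply Nat.ltb_ge in E.
      assert (L <= x + 1)%nat by lia. specialize (IH1 H).
      replace (lo + N - (lo + L))%nat with (N - L)%nat by lia.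
      split; intros; nia.
Qed.

Lemma comb lo hi e : (lo <= e < hi)%nat -> (2 <= hi - lo)%nat ->
  (8 * list_sum (map (fun k => if Nat.ltb e k then k - lo else hi - k)
                 (seq lo (hi - lo))) <= 7 * (hi - lo) * (hi - lo))%nat.
Proof.
  intros H1 H2.
  remember (e - lo)%nat as x. remember (hi - lo)%nat as N.
  assert (e = lo + x)%nat by lia. assert (hi = lo + N)%nat by lia. subst e hi.
  replace (lo + N - lo)%nat with N by lia.
  destruct (comb_aux lo x N ltac:(lia) N ltac:(lia)) as [_ H].
  specialize (H ltac:(lia)).
  set (F := list_sum _) in *.
  clearbody F. clear HeqN Heqx.
  assert (Hsq := Z.square_nonneg (2 * Z.of_nat x + 1 - Z.of_nat N)).
  assert (N * N >= 4) by nia.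
  nia.
Qed.

Local Open Scope R_scope.
Lemma key m : (0 < m)%nat -> forall t T e,
  pa T = (lo T / m)%nat -> pb T = ((hi T - 1) / m)%nat -> (lo T <= e < hi T)%nat ->
  reach m (S t) T e <= (7/8)^t * (INR (hi T - lo T) / INR m).
Proof.
  intros Hm. assert (HmR : 0 < INR m) by (apply lt_0_INR; lia).
  induction t as [|t IH]; intros T e Hpa Hpb He.
  - cbn [reach]. destruct (is_base T) eqn:Hb.
    + simpl. apply Rmult_le_pos; [lra|]. apply Rmult_le_pos; [apply pos_INR|].
      left; apply Rinv_0_lt_compat; auto.
    + unfold is_base in Hb. apply Nat.leb_gt in Hb.
      assert (HN : (m < hi T - lo T)%nat).
      { rewrite Hpa, Hpb in Hb.
        pose proof (Nat.div_mod (lo T) m ltac:(lia)).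
        pose proof (Nat.mod_upper_bound (lo T) m ltac:(lia)).
        pose proof (Nat.div_mod (hi T - 1) m ltac:(lia)).
        pose proof (Nat.mod_upper_bound (hi T - 1) m ltac:(lia)).
        set (a := (lo T / m)%nat) in *. set (q := ((hi T - 1) / m)%nat) in *.
        assert (m * (a + 2) <= m * q)%nat by (apply Nat.mul_le_mono_l; lia).
        lia. }
      eapply Rle_trans.
      { apply Rmult_le_compat_l.
        - left; apply Rinv_0_lt_compat, lt_0_INR; lia.
        - apply (sumR_bound _ _ 1). intros k _. cbn [reach].
          destruct (Nat.ltb e k); lra. }
      rewrite length_seq, Rmult_1_r.
      rewrite (Rinv_l (INR (hi T - lo T))) by (apply not_0_INR; lia).
      apply lt_INR in HN.
      apply (Rmult_le_reg_r (INR m)); auto.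
      replace ((7/8)^0 * (INR (hi T - lo T) / INR m) * INR m) with (INR (hi T - lo T)) by (simpl; field; lra).
      lra.
  - cbn [reach]. destruct (is_base T) eqn:Hb.
    + apply Rmult_le_pos; [apply pow_le; lra|]. apply Rmult_le_pos; [apply pos_INR|].
      left; apply Rinv_0_lt_compat; auto.
    + unfold is_base in Hb. apply Nat.leb_gt in Hb.
      assert (HN : (m < hi T - lo T)%nat).
      { rewrite Hpa, Hpb in Hb.
        pose proof (Nat.div_mod (lo T) m ltac:(lia)).
        pose proof (Nat.mod_upper_bound (lo T) m ltac:(lia)).
        pose proof (Nat.div_mod (hi T - 1) m ltac:(lia)).
        pose proof (Nat.mod_upper_bound (hi T - 1) m ltac:(lia)).
        set (a := (lo T / m)%nat) in *. set (q := ((hi T - 1) / m)%nat) in *.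
        assert (m * (a + 2) <= m * q)%nat by (apply Nat.mul_le_mono_l; lia).
        lia. }
      set (c := (7/8)^t / INR m).
      eapply Rle_trans.
      { apply Rmult_le_compat_l.
        - left; apply Rinv_0_lt_compat, lt_0_INR; lia.
        - apply (sumR_le _ (fun k => c * INR (if Nat.ltb e k then k - lo T else hi T - k))).
          intros k Hk. apply in_seq in Hk.
          destruct (Nat.ltb e k) eqn:E.
          + apply Nat.ltb_lt in E.
            eapply Rle_trans; [apply IH; simpl; auto; lia|].
            simpl. unfold c, Rdiv. right; ring.
          + apply Nat.ltb_ge in E.
            eapply Rle_trans; [apply IH; simpl; auto; lia|].
            simpl. unfold c, Rdiv. right; ring. }
      rewrite sumR_const_mul.
      assert (Hc := comb (lo T) (hi T) e He ltac:(lia)).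
      set (S := list_sum _) in *.
      apply le_INR in Hc. rewrite !mult_INR in Hc. simpl in Hc.
      set (N := INR (hi T - lo T)) in *.
      assert (HNpos : 0 < N) by (apply lt_0_INR; lia).
      assert (Hc0 : 0 <= c) by (unfold c; apply Rmult_le_pos; [apply pow_le; lra| left; apply Rinv_0_lt_compat; auto]).
      apply Rle_trans with (/ N * (c * (7/8 * (N * N)))).
      { apply Rmult_le_compat_l; [left; apply Rinv_0_lt_compat; auto|].
        apply Rmult_le_compat_l; auto. lra. }
      right. unfold c. simpl. field. lra.
Qed.

Lemma pow_exp_bound (p : R) (t : nat) : 1 < p ->
  20 * (ln p / ln (8/7)) <= INR t -> (7/8)^t * p^20 <= 1.
Proof.
  intros Hp Ht.
  assert (Hl : 0 < ln (8/7)) by (rewrite <- ln_1; apply ln_increasing; lra).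
  assert (Hlp : 0 < ln p) by (rewrite <- ln_1; apply ln_increasing; lra).
  rewrite <- (Rpower_pow t (7/8)) by lra.
  rewrite <- (Rpower_pow 20 p) by lra.
  unfold Rpower. rewrite <- exp_plus.
  replace (ln (7/8)) with (- ln (8/7)).
  2:{ replace (7/8) with (/ (8/7)) by field. rewrite ln_Rinv by lra. reflexivity. }
  assert (H: INR t * - ln (8 / 7) + INR 20 * ln p <= 0).
  { apply (Rmult_le_compat_r (ln (8/7))) in Ht; [|lra].
    replace (20 * (ln p / ln (8 / 7)) * ln (8 / 7)) with (20 * ln p) in Ht by (field; lra).
    simpl INR. lra. }
  rewrite <- exp_0. destruct H as [H|H]; [left; apply exp_increasing; auto | rewrite H; lra].
Qed.

Lemma sumR_bound0 {A} (f : A -> R) l c :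
  (forall a, In a l -> f a <= c) ->
  fold_right Rplus 0 (map f l) <= INR (length l) * c.
Proof. apply sumR_bound. Qed.

Theorem lemma1 :
  exists (C : R) (p0 : nat), forall p n : nat,
    (p0 <= p)%nat -> (0 < n)%nat -> Nat.divide p n ->
    prob_levels_gt p n (20 * (ln (INR p) / ln (8 / 7))) <= C / INR p ^ 7.
Proof.
  exists 2, 2%nat. intros p n Hp Hn [m Hm].
  assert (Hm0 : (0 < m)%nat) by nia.
  assert (Hdiv : (n / p = m)%nat) by (subst n; apply Nat.div_mul; lia).
  assert (HpR : 1 < INR p) by (apply lt_1_INR; lia).
  assert (Hl : 0 < ln (8/7)) by (rewrite <- ln_1; apply ln_increasing; lra).
  assert (Hlp : 0 < ln (INR p)) by (rewrite <- ln_1; apply ln_increasing; lra).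
  set (x := 20 * (ln (INR p) / ln (8 / 7))).
  assert (Hx : 0 < x) by (unfold x; apply Rmult_lt_0_compat; [lra| apply Rdiv_lt_0_compat; auto]).
  destruct (archimed x) as [Hup _].
  assert (Hz : (0 < up x)%Z) by (apply lt_IZR; lra).
  assert (Ht : x <= INR (Z.to_nat (up x))).
  { rewrite INR_IZR_INZ, Z2Nat.id by lia. lra. }
  unfold prob_levels_gt. fold x.
  destruct (Z.to_nat (up x)) as [|t] eqn:Et; [lia|].
  unfold prob_levels_ge. rewrite Hdiv.
  assert (Hb : forall e, In e (seq 0 n) -> reach m (S t) (init_task p n) e <= (7/8)^t * INR p).
  { intros e He. apply in_seq in He.
    eapply Rle_trans; [apply key; auto; simpl|].
    - destruct m; [lia|reflexivity].
    - apply (Nat.div_unique _ _ _ (m - 1)); [lia|]. subst n.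
      destruct p as [|p']; [lia|]. replace (S p' - 1)%nat with p' by lia. nia.
    - simpl. replace (n - 0)%nat with (p * m)%nat by lia. rewrite mult_INR.
      right; field. apply not_0_INR; lia. }
  eapply Rle_trans.
  { apply Rmult_le_compat_l; [left; apply Rinv_0_lt_compat, lt_0_INR; lia|].
    apply sumR_bound0. exact Hb. }
  rewrite length_seq, <- Rmult_assoc, Rinv_l, Rmult_1_l by (apply not_0_INR; lia).
  pose proof (pow_exp_bound (INR p) (S t) HpR Ht) as Hpe.
  assert (Hp8 : INR p ^ 8 <= INR p ^ 20) by (apply Rle_pow; lia || lra).
  assert (Hpos : 0 < INR p ^ 7) by (apply pow_lt; lra).
  apply (Rmult_le_reg_r (INR p ^ 7)); auto.
  replace (2 / INR p ^ 7 * INR p ^ 7) with 2 by (field; lra).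
  replace ((7 / 8) ^ t * INR p * INR p ^ 7) with ((8/7) * ((7/8)^(S t) * INR p ^ 8)) by (simpl; field).
  assert (0 <= (7/8)^(S t)) by (apply pow_le; lra).
  assert ((7/8)^(S t) * INR p ^ 8 <= (7/8)^(S t) * INR p ^ 20) by (apply Rmult_le_compat_l; auto).
  lra.
Qed.
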